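(* Let $l\in\mathbb{N}\setminus\{1\}$ and let $(S_i,+)$, $i=1,\dots,l$, be countable adequate commutative partial semigroups. For each $i\in\{1,\dots,l\}$ let $\langle x_{i,n}\rangle_{n=1}^{\infty}$ be an adequate sequence in $S_i$. Let $m,r\in\mathbb{N}$ and suppose $S_1\times S_2\times\cdots\times S_l=\bigcup_{j=1}^{r}D_j$. Then there exist $j\in\{1,\dots,r\}$, for each $i\in\{1,\dots,l-1\}$ a product subsystem $\langle y_{i,n}\rangle_{n=1}^{m}$ of $FS(\langle x_{i,n}\rangle_{n=1}^{\infty})$, and an (infinite) product subsystem $\langle y_{l,n}\rangle_{n=1}^{\infty}$ of $FS(\langle x_{l,n}\rangle_{n=1}^{\infty})$ such that \[ \Big(FS(\langle y_{1,n}\rangle_{n=1}^{m})\times\cdots\times FS(\langle y_{l-1,n}\rangle_{n=1}^{m})\Big)\times FS(\langle y_{l,n}\rangle_{n=1}^{\infty})\subseteq D_j . \]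
   Context: A partial semigroup $(S,+)$ is a set with a map $+$ from a subset of $S\times S$ to $S$ such that $(a+b)+c=a+(b+c)$ whenever either side is defined (then both are defined and equal). It is commutative if for all $a,b$, $a+b$ is defined iff $b+a$ is defined, and then they are equal. For $s\in S$, $\varphi(s)=\{t: s+t\text{ defined}\}$; for finite nonempty $H\subseteq S$, $\sigma(H)=\bigcap_{s\in H}\varphi(s)$; $S$ is adequate if all $\sigma(H)\ne\emptyset$. For a sequence $\langle x_n\rangle$, $FS(\langle x_n\rangle_{n=k}^{\infty})$ is the set of sums $\sum_{n\in F}x_n$ over finite nonempty $F\subseteq\{k,k+1,\dots\}$, and $FS(\langle x_n\rangle_{n=1}^{m})$ the set of such sums over nonempty $F\subseteq\{1,\dots,m\}$. A sequence $\langle x_n\rangle_{n=1}^\infty$ in $S$ is adequate if every $\sum_{n\in F}x_n$ ($F$ finite nonempty) is defined and for every finite nonempty $H\subseteq S$ there is $m$ with $FS(\langle x_n\rangle_{n=m}^\infty)\subseteq\sigma(H)$. Given an adequate sequence $\langle y_n\rangle$ and $k\in\mathbb{N}$, a sequence $\langle x_n\rangle_{n=1}^{m}$ (resp. $\langle x_n\rangle_{n=1}^{\infty}$) is a product subsystem of $FS(\langle y_n\rangle_{n=k}^{\infty})$ if there are finite nonempty $H_n\subseteq\mathbb{N}$ with $\min H_1\ge k$, $\max H_n<\min H_{n+1}$ for all relevant $n$, and $x_n=\sum_{t\in H_n}y_t$ for all relevant $n$. *)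

(* Defs.v *)
From mathcomp Require Import all_boot.
From Stdlib Require List.
Set Implicit Arguments. Unset Strict Implicit. Unset Printing Implicit Defensive.

(* A partial operation on S: op a b = None means "a + b undefined". *)

Definition padd (S : Type) (op : S -> S -> option S) (a b : option S) : option S :=
  match a, b with Some x, Some y => op x y | _, _ => None end.

(* (a+b)+c = a+(b+c) whenever either side is defined (then both defined, equal):
   this is exactly equality of the two option values. *)
Definition is_psemigroup (S : Type) (op : S -> S -> option S) : Prop :=
  forall a b c, padd op (op a b) (Some c) = padd op (Some a) (op b c).

Definition pcommutative (S : Type) (op : S -> S -> option S) : Prop :=
  forall a b, op a b = op b a.

Definition countable_type (S : Type) : Prop :=
  exists f : S -> nat, injective f.

Definition adequate (S : Type) (op : S -> S -> option S) : Prop :=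
  forall H : seq S, H <> [::] ->
    exists t, forall s, List.In s H -> op s t <> None.

(* finite nonempty subsets of nat, represented as strictly increasing lists *)
Definition fin_index (F : seq nat) : Prop := F <> [::] /\ sorted ltn F.

Fixpoint fsum (S : Type) (op : S -> S -> option S) (x : nat -> S) (F : seq nat)
  : option S :=
  match F with
  | [::] => None
  | n :: F' => if F' is [::] then Some (x n) else padd op (Some (x n)) (fsum op x F')
  end.

Definition FS_from (S : Type) (op : S -> S -> option S) (x : nat -> S) (k : nat)
  (s : S) : Prop :=
  exists F, fin_index F /\ all (fun n => k <= n) F /\ fsum op x F = Some s.

(* s \in FS(<x_n>_{n < m}) (0-based finite sequence of length m) *)
Definition FS_upto (S : Type) (op : S -> S -> option S) (x : nat -> S) (m : nat)
  (s : S) : Prop :=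
  exists F, fin_index F /\ all (fun n => n < m) F /\ fsum op x F = Some s.

Definition adequate_seq (S : Type) (op : S -> S -> option S) (x : nat -> S) : Prop :=
  (forall F, fin_index F -> fsum op x F <> None) /\
  (forall H : seq S, H <> [::] ->
     exists k, forall s, FS_from op x k s -> forall h, List.In h H -> op h s <> None).

Definition prodsub_fin (S : Type) (op : S -> S -> option S) (x : nat -> S)
  (k m : nat) (y : nat -> S) : Prop :=
  exists H : nat -> seq nat,
    (forall n, n < m -> fin_index (H n)) /\
    (0 < m -> all (fun t => k <= t) (H 0)) /\
    (forall n, n.+1 < m -> last 0 (H n) < head 0 (H n.+1)) /\
    (forall n, n < m -> fsum op x (H n) = Some (y n)).

Definition prodsub_inf (S : Type) (op : S -> S -> option S) (x : nat -> S)
  (k : nat) (y : nat -> S) : Prop :=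
  exists H : nat -> seq nat,
    (forall n, fin_index (H n)) /\
    all (fun t => k <= t) (H 0) /\
    (forall n, last 0 (H n) < head 0 (H n.+1)) /\
    (forall n, fsum op x (H n) = Some (y n)).

(* Main.v *)
Require Import Defs.
From mathcomp Require Import all_boot zify.
From mathcomp Require classical_sets filter.
From Stdlib Require Import ClassicalEpsilon FunctionalExtensionality PropExtensionality Classical.

Set Implicit Arguments. Unset Strict Implicit. Unset Printing Implicit Defensive.


Definition pset := seq nat -> Prop.
Definition fam := pset -> Prop.

Record isUF (p : fam) : Prop := {
  uf_T : p (fun _ => True);
  uf_I : forall A B : pset, p A -> p B -> p (fun x => A x /\ B x);
  uf_S : forall A B : pset, (forall x, A x -> B x) -> p A -> p B;
  uf_P : ~ p (fun _ => False);
  uf_U : forall A : pset, p A \/ p (fun x => ~ A x) }.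

Definition Tk (k : nat) : pset := fun F => fin_index F /\ all (fun t => k <= t) F.
Definition delta (p : fam) := isUF p /\ forall k, p (Tk k).
Definition umul (p q : fam) : fam := fun A => p (fun F => q (fun G => A (F ++ G))).

Lemma uf_neg p A : isUF p -> p (fun x => ~ A x) -> ~ p A.
Proof.
move=> U nA pA; apply: (uf_P U); apply: (uf_S U _ (uf_I U pA nA)).
by move=> x [].
Qed.

Lemma uf_negI p A : isUF p -> ~ p A -> p (fun x => ~ A x).
Proof. by move=> U nA; case: (uf_U U A). Qed.

Lemma uf_ex p A : isUF p -> p A -> exists x, A x.
Proof.
move=> U pA; apply: NNPP => H; apply: (uf_P U); apply: (uf_S U _ pA) => //.
by move=> x Ax; apply: H; exists x.
Qed.

Lemma uf_eq p q : isUF p -> isUF q -> (forall A, p A -> q A) -> p = q.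
Proof.
move=> Up Uq H; apply: functional_extensionality => A.
apply: propositional_extensionality; split; first exact: H.
move=> qA; case: (uf_U Up A) => // /H nA; by case: (uf_neg Uq nA).
Qed.

Lemma mul_UF p q : isUF p -> isUF q -> isUF (umul p q).
Proof.
move=> Up Uq; split; rewrite /umul.
- by apply: (uf_S Up _ (uf_T Up)) => F _; apply: uf_T.
- move=> A B pA pB; apply: (uf_S Up _ (uf_I Up pA pB)) => F [] ? ?; exact: uf_I.
- by move=> A B AB; apply: (uf_S Up) => F; apply: (uf_S Uq) => G; apply: AB.
- by move=> H; apply: (uf_P Up); apply: (uf_S Up _ H) => F /(uf_P Uq).
- move=> A; case: (uf_U Up (fun F => q (fun G => A (F ++ G)))) => H; [left|right] => //.
  by apply: (uf_S Up _ H) => F; apply: uf_negI.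
Qed.

Lemma Tcat k F G : Tk k F -> Tk (last 0 F).+1 G -> Tk k (F ++ G).
Proof.
case: F => [|a F] [[Fn sF] aF] //.
case: G => [|b G] [[Gn sG] bG] //.
split; first split.
- by [].
- rewrite /= cat_path.
  move: sF => /= ->; rewrite /=.
  move: bG => /= /andP [h1 _]. by rewrite h1 /=.
- rewrite all_cat; apply/andP; split; first exact: aF.
  have hl : k <= last a F by move: (mem_last a F); move/allP: aF => Hk /Hk.
  apply/allP => t /(allP bG) Ht.
  exact: (leq_trans hl (ltnW Ht)).
Qed.

Lemma Tk_ne k : exists F, Tk k F.
Proof. exists [:: k]; split; [by split | by rewrite /= leqnn]. Qed.

Lemma mul_delta p q : delta p -> delta q -> delta (umul p q).
Proof.
move=> [Up Tp] [Uq Tq]; split; first exact: mul_UF.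
move=> k; rewrite /umul; apply: (uf_S Up _ (Tp k)) => F TF.
apply: (uf_S Uq _ (Tq (last 0 F).+1)) => G TG; exact: Tcat.
Qed.

Lemma mul_assoc p q s : umul (umul p q) s = umul p (umul q s).
Proof.
apply: functional_extensionality => A; rewrite /umul; f_equal.
apply: functional_extensionality => F; f_equal.
apply: functional_extensionality => G; f_equal.
apply: functional_extensionality => H; by rewrite catA.
Qed.

Record PF (F : fam) : Prop := {
  pf_T : F (fun _ => True);
  pf_I : forall A B : pset, F A -> F B -> F (fun x => A x /\ B x);
  pf_S : forall A B : pset, (forall x, A x -> B x) -> F A -> F B;
  pf_P : ~ F (fun _ => False) }.

Lemma PF_proper (F : fam) : PF F -> filter.ProperFilter F.
Proof.
move=> [h1 h2 h3 h4]; constructor; first exact: h4.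
constructor; [exact: h1| |].
- move=> A B; exact: h2.
- move=> A B; exact: h3.
Qed.

Lemma UFL (F : fam) : PF F -> exists q, isUF q /\ forall A, F A -> q A.
Proof.
move=> /PF_proper PFF; have [G [UG FG]] := filter.ultraFilterLemma PFF.
exists G; split => //.
have GF : filter.ProperFilter G := filter.ultra_proper.
have hT : G (fun _ => True) by exact: (@filter.filterT _ G).
have hS : forall A B : pset, (forall x, A x -> B x) -> G A -> G B.
  by move=> A B AB; apply: (@filter.filterS _ G).
have hI : forall A B : pset, G A -> G B -> G (fun x => A x /\ B x).
  by move=> A B; apply: (@filter.filterI _ G).
have hP : ~ G (fun _ => False) by exact: (@filter.filter_not_empty _ G).
split => // A.
case: (classic (G A)) => [|nGA]; [by left|right].
pose G' : fam := fun B => exists C, G C /\ forall x, C x -> ~ A x -> B x.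
have PG' : PF G'.
  split.
  - by exists (fun _ => True).
  - move=> B1 B2 [C1 [g1 h1]] [C2 [g2 h2]]; exists (fun x => C1 x /\ C2 x); split.
      exact: hI.
    by move=> x [c1 c2] nA; split; [apply: h1|apply: h2].
  - move=> B1 B2 B12 [C [g h]]; exists C; split => // x cx na; apply: B12; exact: h.
  - move=> [C [g h]]; apply: nGA; apply: hS g => x cx; apply: NNPP => na; exact: h cx na.
have := @filter.max_filter _ G UG G' (PF_proper PG').
have sub : forall B, G B -> G' B by move=> B gB; exists B; split => // x ? _.
move=> /(_ sub) eq; rewrite -eq; exists (fun _ => True); split => //.
Qed.

Definition Cl (F : fam) (q : fam) := delta q /\ forall A, F A -> q A.
Definition Good (F : fam) := PF F /\ (forall k, F (Tk k)) /\
  (forall q q', Cl F q -> Cl F q' -> Cl F (umul q q')).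

Lemma Good_pt F : Good F -> exists q, Cl F q.
Proof.
move=> [PFF [TF _]]; have [q [Uq Fq]] := UFL PFF.
by exists q; split => //; split => // k; apply: Fq.
Qed.

Definition tailF : fam := fun A => exists k, forall x, Tk k x -> A x.

Lemma Tk_mono k k' x : k <= k' -> Tk k' x -> Tk k x.
Proof.
move=> kk [fx ax]; split => //; apply/allP => t /(allP ax) /= h; exact: leq_trans kk h.
Qed.

Lemma tail_Good : Good tailF.
Proof.
split; [split|split].
- by exists 0.
- move=> A B [k hk] [k' hk']; exists (maxn k k') => x Tx; split.
    by apply: hk; apply: Tk_mono Tx; apply: leq_maxl.
  by apply: hk'; apply: Tk_mono Tx; apply: leq_maxr.
- move=> A B AB [k hk]; exists k => x /hk; exact: AB.
- by move=> [k hk]; have [x Tx] := Tk_ne k; apply: hk Tx.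
- by move=> k; exists k.
- move=> q q' [dq _] [dq' _]; have dm := mul_delta dq dq'; split => //.
  move=> A [k hk]; case: dm => Um Tm; exact: (uf_S Um _ (Tm k)).
Qed.

Lemma Good_max : exists M, Good M /\
  forall B, Good B -> (forall A, M A -> B A) -> forall A, B A -> M A.
Proof.
pose P : fam -> Prop := fun F => (forall A, ~ F A) \/ Good F.
have [M [PM Mmax]] : exists M, P M /\ forall B, classical_sets.proper M B -> ~ P B.
  apply: classical_sets.Zorn_bigcup => Fs FsP tot.
  case: (classic (exists A X, Fs X /\ X A)); last first.
    move=> h; left => A [X FX XA]; apply: h; by exists A, X.
  move=> [A0 [X0 [FX0 X0A]]]; right.
  have gX : forall X A, Fs X -> X A -> Good X.
    move=> X A FX XA; case: (FsP X FX) => // h; by case: (h A).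
  have [[T0 I0 S0 P0] [Tk0 _]] := gX _ _ FX0 X0A.
  split; [split|split].
  - by exists X0.
  - move=> A B [X1 F1 A1] [X2 F2 B2].
    case: (tot X1 X2 F1 F2) => h.
    + exists X2 => //; have [[_ I _ _] _] := gX _ _ F2 B2; apply: I => //; exact: h.
    + exists X1 => //; have [[_ I _ _] _] := gX _ _ F1 A1; apply: I => //; exact: h.
  - move=> A B AB [X FX XA]; exists X => //; have [[_ _ S _] _] := gX _ _ FX XA.
    exact: S XA.
  - move=> [X FX XA]; have [[_ _ _ PP] _] := gX _ _ FX XA; exact: PP.
  - by move=> k; exists X0 => //; apply: Tk0.
  - move=> q q' [dq hq] [dq' hq']; split; first exact: mul_delta.
    move=> A [X FX XA]; have [_ [_ SG]] := gX _ _ FX XA.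
    have cq : Cl X q by split => // B XB; apply: hq; exists X.
    have cq' : Cl X q' by split => // B XB; apply: hq'; exists X.
    by case: (SG _ _ cq cq') => _; apply.
have GM : Good M.
  case: PM => // hM; exfalso; apply: (Mmax tailF); last by right; exact: tail_Good.
  split; first by move=> A /hM.
  by move=> h; apply: (hM (fun _ => True)); apply: h; exists 0.
exists M; split => // B GB MB A BA; apply: NNPP => nMA.
apply: (Mmax B); last by right.
split; first exact: MB.
by move=> h; apply: nMA; apply: h.
Qed.

Lemma Ellis : exists p, delta p /\ umul p p = p.
Proof.
have [M [GM Mmax]] := Good_max.
have [PFM [TM SM]] := GM.
have [p Cp] := Good_pt GM.
have [[Up Tp] Mp] := Cp.
pose Hf : fam := fun A => forall q, Cl M q -> umul q p A.
have closedT : forall r, Cl Hf r -> exists q, Cl M q /\ r = umul q p.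
  move=> r [[Ur Tr] Hr].
  pose K : fam := fun Z => exists Y A, M Y /\ r A /\
     forall F, Y F -> p (fun G => A (F ++ G)) -> Z F.
  have PK : PF K.
    split.
    - exists (fun _ => True), (fun _ => True); split; first exact: (pf_T PFM).
      by split; first exact: (uf_T Ur).
    - move=> Z1 Z2 [Y1 [A1 [m1 [r1 h1]]]] [Y2 [A2 [m2 [r2 h2]]]].
      exists (fun x => Y1 x /\ Y2 x), (fun x => A1 x /\ A2 x); split; first exact: (pf_I PFM).
      split; first exact: (uf_I Ur).
      move=> F [y1 y2] pA; split.
        by apply: h1 => //; apply: (uf_S Up _ pA) => G [].
      by apply: h2 => //; apply: (uf_S Up _ pA) => G [].
    - move=> Z1 Z2 Z12 [Y [A [m [rA h]]]]; exists Y, A; split => //; split => //.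
      by move=> F yF pA; apply: Z12; apply: h.
    - move=> [Y [A [m [rA h]]]].
      have nA : Hf (fun x => ~ A x).
        move=> q [[Uq Tq] Mq]; rewrite /umul.
        apply: (uf_S Uq _ (Mq _ m)) => F yF.
        apply: uf_negI => // pA; exact: (h F yF pA).
      have := Hr _ nA; move/(uf_neg Ur); exact.
  have [q [Uq Kq]] := UFL PK.
  have Mq : forall A, M A -> q A.
    move=> A mA; apply: Kq; exists A, (fun _ => True); split => //; split; first exact: (uf_T Ur).
    by move=> F.
  have Cq : Cl M q by split => //; split => // k; apply: Mq.
  exists q; split => //.
  apply: uf_eq => //; first exact: mul_UF.
  move=> A rA; apply: Kq; exists (fun _ => True), A; split; first exact: (pf_T PFM).
  by split.
have GH : Good Hf.
  have q0 : exists q, Cl M q /\ umul q p = umul p p by exists p.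
  split; [split|split].
  - by move=> q [[Uq _] _]; apply: (uf_T (mul_UF Uq Up)).
  - move=> A B hA hB q cq; have [[Uq _] _] := cq.
    exact: (uf_I (mul_UF Uq Up) (hA q cq) (hB q cq)).
  - move=> A B AB hA q cq; have [[Uq _] _] := cq.
    exact: (uf_S (mul_UF Uq Up) AB (hA q cq)).
  - move=> h; have [[Uq _] _] := Cp.
    exact: (uf_P (mul_UF Up Up) (h p Cp)).
  - move=> k q [dq _]; have [_ Tm] := mul_delta dq (conj Up Tp); exact: Tm.
  - move=> r r' cr cr'.
    have [q [cq er]] := closedT r cr.
    have [q' [cq' er']] := closedT r' cr'.
    have dr := proj1 cr; have dr' := proj1 cr'.
    split; first exact: mul_delta.
    move=> A hA; rewrite er er' -(mul_assoc (umul q p) q' p).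
    apply: hA; exact: (SM _ _ (SM _ _ cq Cp) cq').
have MH : forall A, M A -> Hf A.
  move=> A mA q cq; case: (SM _ _ cq Cp) => _ h; exact: h.
have [q0 [Cq0 q0p]] : exists q, Cl M q /\ p = umul q p.
  apply: closedT; split; first exact: (conj Up Tp).
  move=> A /(Mmax _ GH MH); exact: Mp.
pose Gf : fam := fun A => forall q, Cl M q -> umul q p = p -> q A.
have closedX : forall r, Cl Gf r -> Cl M r /\ umul r p = p.
  move=> r [[Ur Tr] Gr].
  have Cr : Cl M r.
    split; first exact: (conj Ur Tr).
    move=> A mA; apply: Gr => q cq _; exact: (proj2 cq _ mA).
  split => //; symmetry; apply: uf_eq => //; first exact: mul_UF.
  move=> A pA; apply: Gr => q cq qp; rewrite -qp in pA; exact: pA.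
have GG : Good Gf.
  split; [split|split].
  - by move=> q [[Uq _] _] _; apply: (uf_T Uq).
  - move=> A B hA hB q cq e; have [[Uq _] _] := cq.
    exact: (uf_I Uq (hA q cq e) (hB q cq e)).
  - move=> A B AB hA q cq e; have [[Uq _] _] := cq.
    exact: (uf_S Uq AB (hA q cq e)).
  - by move=> h; have [[Uq _] _] := Cq0; apply: (uf_P Uq (h q0 Cq0 (esym q0p))).
  - by move=> k q [[_ Tq] _].
  - move=> r r' cr cr'.
    have [cr1 er] := closedX r cr.
    have [cr1' er'] := closedX r' cr'.
    have dr := proj1 cr; have dr' := proj1 cr'.
    split; first exact: mul_delta.
    move=> A hA; apply: hA; first exact: SM.
    by rewrite mul_assoc er' er.
have MG : forall A, M A -> Gf A by move=> A mA q cq _; exact: (proj2 cq _ mA).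
have := closedX p; case.
  split; first exact: (conj Up Tp).
  move=> A /(Mmax _ GG MG); exact: Mp.
by move=> _ e; exists p; split.
Qed.

Definition star (p : fam) (B : pset) := forall F, B F -> p (fun G => B (F ++ G)).
Definition Yof (B : pset) : seq nat := epsilon (inhabits [::]) B.
Definition nextB (B : pset) : pset := fun G =>
  B G /\ B (Yof B ++ G) /\ Tk (last 0 (Yof B)).+1 G.

Lemma GG p A : delta p -> umul p p = p -> p A ->
  exists Y : nat -> seq nat, (forall n, fin_index (Y n)) /\
    (forall n, last 0 (Y n) < head 0 (Y n.+1)) /\
    (forall G, fin_index G -> A (flatten (map Y G))).
Proof.
move=> [Up Tp] idem pA.
have idm : forall X, p X -> p (fun G => p (fun H => X (G ++ H))).
  by move=> X pX; rewrite -idem in pX.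
pose As : pset := fun F => A F /\ p (fun G => A (F ++ G)) /\ Tk 0 F.
have pAs : p As.
  apply: (uf_I Up pA); apply: (uf_I Up (idm _ pA)); exact: Tp.
have sAs : star p As.
  move=> F [aF [pF tF]]; apply: (uf_I Up pF); apply: uf_I => //.
    apply: (uf_S Up _ (idm _ pF)) => G; by apply: (uf_S Up) => H; rewrite catA.
  apply: (uf_S Up _ (Tp (last 0 F).+1)) => G; exact: Tcat.
pose Bs n := iter n nextB As.
have inv : forall n, p (Bs n) /\ star p (Bs n) /\ forall x, Bs n x -> As x.
  elim=> [|n [pB [sB sub]]]; first by split.
  rewrite /Bs /= -/(Bs n).
  have bY : Bs n (Yof (Bs n)).
    by rewrite /Yof; apply: epsilon_spec; apply: (uf_ex Up pB).
  split; [|split].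
  - apply: (uf_I Up pB); apply: (uf_I Up (sB _ bY)); exact: Tp.
  - move=> G [bG [bYG tG]]; apply: (uf_I Up (sB _ bG)); apply: uf_I => //.
      by apply: (uf_S Up _ (sB _ bYG)) => H; rewrite catA.
    apply: (uf_S Up _ (Tp (last 0 G).+1)) => H; exact: Tcat.
  - by move=> x [/sub].
have decr : forall n k x, Bs (k + n) x -> Bs n x.
  move=> n; elim=> [|k IH] x; first by [].
  rewrite addSn /Bs /= -/(Bs (k + n)) => [[h _]]; exact: IH.
have decr' : forall n n' x, n <= n' -> Bs n' x -> Bs n x.
  by move=> n n' x /subnK <-; apply: decr.
pose Y n := Yof (Bs n).
have bY : forall n, Bs n (Y n).
  move=> n; rewrite /Y /Yof; apply: epsilon_spec; exact: (uf_ex Up (proj1 (inv n))).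
exists Y; split; [|split].
- by move=> n; have [_ [_ /(_ _ (bY n)) [_ [_ []]]]] := inv n.
- move=> n; have := bY n.+1; rewrite /Bs /= -/(Bs n) => [[_ [_ [[]]]]].
  case: (Y n.+1) => [|b s] //= _ _ /andP [h _]; exact: h.
- have key : forall G, fin_index G -> forall n, all (fun t => n <= t) G ->
      Bs n (flatten (map Y G)).
    elim=> [|a G IH] [_ sG] // n /= /andP [na aG].
    case: G IH sG aG => [|b G] IH sG aG.
      by rewrite /= cats0; apply: (decr' _ _ _ na); apply: bY.
    apply: (decr' _ _ _ na).
    have hG : fin_index (b :: G) by split => //; exact: (path_sorted sG).
    have := IH hG a.+1 (order_path_min ltn_trans sG).
    move=> h; have : Bs a.+1 (flatten (map Y (b :: G))) by exact: h.
    rewrite /Bs /= -/(Bs a) => [[_ [h2 _]]]; exact: h2.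
  move=> G fG; have := key G fG 0 (introT allP (fun t _ => leq0n t)).
  by move/(proj2 (proj2 (inv 0))) => [].
Qed.

Lemma uf_part p (f : seq nat -> nat) r : isUF p -> (forall G, f G < r) ->
  exists j, j < r /\ p (fun G => f G = j).
Proof.
move=> Up hf.
suff : forall r', p (fun G => f G < r') -> exists j, j < r' /\ p (fun G => f G = j).
  apply; apply: (uf_S Up _ (uf_T Up)) => G _; exact: hf.
elim=> [|r' IH] h.
  by exfalso; apply: (uf_P Up); apply: (uf_S Up _ h).
case: (uf_U Up (fun G => f G = r')) => h'.
  by exists r'.
have [j [jr pj]] : exists j, j < r' /\ p (fun G => f G = j).
  apply: IH; apply: (uf_S Up _ (uf_I Up h h')) => G [h1 h2].
  rewrite ltnS leq_eqVlt in h1; case/orP: h1 => // /eqP; by [].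
by exists j; split => //; apply: ltnW.
Qed.

Fixpoint subl (a n : nat) : seq (seq nat) :=
  if n is n'.+1 then [seq a :: s | s <- subl a.+1 n'] ++ subl a.+1 n' else [:: [::]].

Lemma subl_nil a n : [::] \in subl a n.
Proof. elim: n a => [|n IH] a //=; by rewrite mem_cat IH orbT. Qed.

Lemma subl_all n a s : sorted ltn s -> all (fun t => a <= t < a + n) s -> s \in subl a n.
Proof.
elim: n a s => [|n IH] a [|t s] //=.
- by rewrite addn0 => _ /andP [/andP [h1 h2] _]; exfalso; lia.
- by move=> _ _; rewrite mem_cat subl_nil orbT.
move=> st /andP [/andP [h1 h2] hs].
have ss := path_sorted st.
have hm := order_path_min ltn_trans st.
rewrite mem_cat; case: (eqVneq t a) => [eta|nta].
  apply/orP; left; apply/mapP; exists s; last by rewrite eta.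
  apply: IH => //; apply/allP => u us.
  move/allP: hm => /(_ u us) htu; move/allP: hs => /(_ u us) /andP [_ hu].
  apply/andP; split; lia.
apply/orP; right; apply: IH => /=; first exact: st.
apply/andP; split; first (apply/andP; split; lia).
apply/allP => u us.
move/allP: hm => /(_ u us) htu; move/allP: hs => /(_ u us) /andP [_ hu].
apply/andP; split; lia.
Qed.

Lemma uf_list p (R : seq nat -> pset) (L : seq (seq nat)) : isUF p ->
  (forall s, s \in L -> p (R s)) -> p (fun G => forall s, s \in L -> R s G).
Proof.
move=> Up; elim: L => [|s L IH] h.
  by apply: (uf_S Up _ (uf_T Up)) => G _ s.
have h1 := h s (mem_head _ _).
have h2 : p (fun G => forall s, s \in L -> R s G).
  apply: IH => s' hs'; apply: h; by rewrite in_cons hs' orbT.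
apply: (uf_S Up _ (uf_I Up h1 h2)) => G [r1 r2] s'.
rewrite in_cons => /orP [/eqP -> //|]; exact: r2.
Qed.

Definition UU (Y : nat -> seq nat) (G : seq nat) := flatten (map Y G).
Definition allowed (Yc : nat -> nat -> seq nat) (m k : nat) (Phi : nat -> seq nat) :=
  forall i, i < k -> exists G, fin_index G /\ all (fun n => n < m) G /\ Phi i = UU (Yc i) G.
Definition upd (Phi : nat -> seq nat) (k : nat) (G : seq nat) : nat -> seq nat :=
  fun i => if i == k then G else Phi i.

Lemma FI p Yc m : isUF p -> forall k (Q : (nat -> seq nat) -> pset),
  (forall Phi Phi' G, (forall i, i < k -> Phi i = Phi' i) -> Q Phi G -> Q Phi' G) ->
  (forall Phi, allowed Yc m k Phi -> p (Q Phi)) ->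
  p (fun G => forall Phi, allowed Yc m k Phi -> Q Phi G).
Proof.
move=> Up; elim=> [|k IH] Q dep hQ.
  have h0 := hQ (fun _ => [::]) (fun i (hi : i < 0) => False_ind _ (notF hi)).
  apply: (uf_S Up _ h0) => G qG Phi _; apply: (dep _ _ _ _ qG) => i; by rewrite ltn0.
pose Q' : (nat -> seq nat) -> pset := fun Phi G => forall s, s \in subl 0 m ->
  (fin_index s /\ all (fun n => n < m) s) -> Q (upd Phi k (UU (Yc k) s)) G.
have dep' : forall Phi Phi' G, (forall i, i < k -> Phi i = Phi' i) -> Q' Phi G -> Q' Phi' G.
  move=> Phi Phi' G ag q s ss vs; apply: dep (q s ss vs) => i ik.
  rewrite /upd; case: (eqVneq i k) => // nik; apply: ag; lia.
have hQ' : forall Phi, allowed Yc m k Phi -> p (Q' Phi).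
  move=> Phi al; apply: uf_list => // s _.
  case: (classic (fin_index s /\ all (fun n => n < m) s)) => vs.
    have al' : allowed Yc m k.+1 (upd Phi k (UU (Yc k) s)).
      move=> i ik; rewrite /upd; case: (eqVneq i k) => [->|nik]; first by exists s; case: vs.
      by apply: al; lia.
    by apply: (uf_S Up _ (hQ _ al')) => G q _.
  by apply: (uf_S Up _ (uf_T Up)) => G _ /vs.
apply: (uf_S Up _ (IH Q' dep' hQ')) => G h Phi al.
have alk : allowed Yc m k Phi by move=> i ik; apply: al; lia.
have [s [fs [ms es]]] := al k (ltnSn k).
have sin : s \in subl 0 m.
  apply: subl_all; first exact: (proj2 fs).
  apply/allP => t /(allP ms) /= ht; rewrite add0n ht; by [].
have := h Phi alk s sin (conj fs ms).
apply: dep => i _; rewrite /upd; case: (eqVneq i k) => [->|//]; by rewrite es.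
Qed.

Lemma padd_none S (op : S -> S -> option S) a : padd op a None = None.
Proof. by case: a. Qed.

Lemma padd_assoc S (op : S -> S -> option S) : is_psemigroup op ->
  forall a b c, padd op (padd op a b) c = padd op a (padd op b c).
Proof.
move=> sg [a|] [b|] [c|] //=; rewrite ?padd_none //.
all: try by case: (op a b).
all: try exact: sg.
all: idtac.
Qed.

Lemma fsum_cat S (op : S -> S -> option S) x : is_psemigroup op ->
  forall a b, a <> [::] -> b <> [::] -> fsum op x (a ++ b) = padd op (fsum op x a) (fsum op x b).
Proof.
move=> sg; elim=> [|u a IH] b // _ nb.
case: a IH => [|v a] IH.
  by case: b nb.
have e1 : fsum op x ((u :: v :: a) ++ b) = padd op (Some (x u)) (fsum op x ((v :: a) ++ b)) by [].
have e2 : fsum op x (u :: v :: a) = padd op (Some (x u)) (fsum op x (v :: a)) by [].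
by rewrite e1 e2 IH // padd_assoc.
Qed.

Lemma fsum_flatten S (op : S -> S -> option S) (x y : nat -> S) (Y : nat -> seq nat) :
  is_psemigroup op -> (forall n, Y n <> [::]) -> (forall n, fsum op x (Y n) = Some (y n)) ->
  forall G, G <> [::] -> fsum op x (UU Y G) = fsum op y G.
Proof.
move=> sg ne hY; elim=> [|a G IH] // _.
rewrite /UU /= -/(UU Y G).
case: G IH => [|b G] IH; first by rewrite cats0 hY.
rewrite fsum_cat //; last first.
  by rewrite /UU /=; case: (Y b) (ne b).
by rewrite hY IH.
Qed.

Fixpoint hh (p : fam) (c : (nat -> seq nat) -> nat) (l r d : nat) (Phi : nat -> seq nat) : nat :=
  match d with
  | 0 => c Phi
  | d'.+1 => epsilon (inhabits 0) (fun j => j < r /\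
              p (fun G => hh p c l r d' (upd Phi (l - d'.+1) G) = j))
  end.

Definition blocks (Z : nat -> seq nat) :=
  (forall n, fin_index (Z n)) /\ (forall n, last 0 (Z n) < head 0 (Z n.+1)).

Section H.
Variables (p : fam) (c : (nat -> seq nat) -> nat) (l r : nat).
Hypothesis Up : isUF p.
Hypothesis cr : forall Phi, c Phi < r.
Hypothesis cdep : forall Phi Phi', (forall i, i < l -> Phi i = Phi' i) -> c Phi = c Phi'.

Lemma hh_lt : forall d Phi, hh p c l r d Phi < r.
Proof.
elim=> [|d IH] Phi /=; first exact: cr.
have [j [jr pj]] := @uf_part p (fun G => hh p c l r d (upd Phi (l - d.+1) G)) r Up (fun G => IH _).
have := epsilon_spec (inhabits 0) (fun j => j < r /\
              p (fun G => hh p c l r d (upd Phi (l - d.+1) G) = j)) (ex_intro _ j (conj jr pj)).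
by case.
Qed.

Lemma hh_S : forall d Phi, p (fun G => hh p c l r d (upd Phi (l - d.+1) G) = hh p c l r d.+1 Phi).
Proof.
move=> d Phi.
have [j [jr pj]] := @uf_part p (fun G => hh p c l r d (upd Phi (l - d.+1) G)) r Up (fun G => hh_lt _ _).
have := epsilon_spec (inhabits 0) (fun j => j < r /\
              p (fun G => hh p c l r d (upd Phi (l - d.+1) G) = j)) (ex_intro _ j (conj jr pj)).
by case.
Qed.

Lemma hh_dep : forall d, d <= l -> forall Phi Phi', (forall i, i < l - d -> Phi i = Phi' i) ->
  hh p c l r d Phi = hh p c l r d Phi'.
Proof.
elim=> [|d IH] dl Phi Phi' ag /=.
  by apply: cdep => i il; apply: ag; rewrite subn0.
have E : (fun G => hh p c l r d (upd Phi (l - d.+1) G)) =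
         (fun G => hh p c l r d (upd Phi' (l - d.+1) G)).
  apply: functional_extensionality => G; apply: IH; first lia.
  move=> i il; rewrite /upd; case: (eqVneq i (l - d.+1)) => // ne; apply: ag; lia.
congr (epsilon _ _); apply: functional_extensionality => j.
by rewrite -[fun G => hh p c l r d (upd Phi' _ G) = j]/(fun G => (fun G => hh p c l r d (upd Phi' (l - d.+1) G)) G = j) -E.
Qed.

End H.

Section St.
Variables (p : fam) (c : (nat -> seq nat) -> nat) (l r m : nat).
Hypothesis Dp : delta p.
Hypothesis idem : umul p p = p.
Hypothesis cr : forall Phi, c Phi < r.
Hypothesis cdep : forall Phi Phi', (forall i, i < l -> Phi i = Phi' i) -> c Phi = c Phi'.

Lemma upd_id Phi k : upd Phi k (Phi k) = Phi.
Proof. apply: functional_extensionality => i; rewrite /upd; by case: eqVneq => [->|]. Qed.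

Lemma step Yc k j0 : k < l ->
  (forall Phi, allowed Yc m k Phi -> hh p c l r (l - k) Phi = j0) ->
  exists Z, blocks Z /\ forall Phi, allowed Yc m k Phi ->
    (exists G, fin_index G /\ Phi k = UU Z G) -> hh p c l r (l - k).-1 Phi = j0.
Proof.
move=> kl inv.
have [Up Tp] := Dp.
set d := (l - k).-1.
have ed : d.+1 = l - k by rewrite /d; lia.
have ek : l - d.+1 = k by rewrite ed; lia.
pose Q : (nat -> seq nat) -> pset := fun Phi G => hh p c l r d (upd Phi k G) = j0.
have dep : forall Phi Phi' G, (forall i, i < k -> Phi i = Phi' i) -> Q Phi G -> Q Phi' G.
  move=> Phi Phi' G ag; rewrite /Q => <-; symmetry; apply: (@hh_dep p c l r cdep); first lia.
  move=> i il; rewrite /upd; case: eqVneq => // ne; apply: ag; lia.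
have hQ : forall Phi, allowed Yc m k Phi -> p (Q Phi).
  move=> Phi al; have := hh_S l Up cr d Phi; rewrite ek ed inv //.
have pA := FI Up dep hQ.
have [Z [fZ [oZ AZ]]] := GG Dp idem pA.
exists Z; split; first by split.
move=> Phi al [G [fG eG]].
have := AZ G fG Phi al; rewrite /Q /UU -/(UU Z G) -eG upd_id //.
Qed.

Lemma build : 0 < l -> forall k, k < l -> exists Yc, (forall i, i < k -> blocks (Yc i)) /\
  forall Phi, allowed Yc m k Phi -> hh p c l r (l - k) Phi = hh p c l r l (fun _ => [::]).
Proof.
move=> l0; elim=> [|k IH] kl.
  exists (fun _ _ => [::]); split => // Phi _; rewrite subn0.
  apply: (@hh_dep p c l r cdep) => // i; lia.
have [Yc [bY inv]] := IH (ltnW kl).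
have [Z [bZ hZ]] := step (ltnW kl) inv.
exists (fun i => if i == k then Z else Yc i); split.
  move=> i ik; case: eqVneq => // ne; apply: bY; lia.
move=> Phi al.
have e : l - k.+1 = (l - k).-1 by lia.
rewrite e; apply: hZ.
  move=> i ik; have [G [fG [mG eG]]] := al i (ltn_trans ik (ltnSn k)).
  exists G; split => //; split => //; move: eG; case: eqVneq => // ?; lia.
have [G [fG [mG eG]]] := al k (ltnSn k).
by exists G; split => //; move: eG; rewrite eqxx.
Qed.

End St.

Unset Implicit Arguments. Set Strict Implicit.

Theorem theorem8 (l : nat) (hl : 1 < l) (S : 'I_l -> Type)
  (op : forall i : 'I_l, S i -> S i -> option (S i))
  (Hsg : forall i, is_psemigroup (op i))
  (Hcomm : forall i, pcommutative (op i))
  (Hcount : forall i, countable_type (S i))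
  (Hadeq : forall i, adequate (op i))
  (x : forall i : 'I_l, nat -> S i)
  (Hx : forall i, adequate_seq (op i) (x i))
  (m r : nat) (hm : 0 < m) (hr : 0 < r)
  (D : nat -> (forall i : 'I_l, S i) -> Prop)
  (Hcov : forall p : (forall i : 'I_l, S i), exists j, j < r /\ D j p) :
  exists j, j < r /\
    exists y : forall i : 'I_l, nat -> S i,
      (forall i : 'I_l, val i < l.-1 -> prodsub_fin (op i) (x i) 0 m (y i)) /\
      (forall i : 'I_l, val i = l.-1 -> prodsub_inf (op i) (x i) 0 (y i)) /\
      (forall p : (forall i : 'I_l, S i),
         (forall i : 'I_l, val i < l.-1 -> FS_upto (op i) (y i) m (p i)) ->
         (forall i : 'I_l, val i = l.-1 -> FS_from (op i) (y i) 0 (p i)) ->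
         D j p).
Proof.
have [u [Du idem]] := Ellis.
have [Uu Tu] := Du.
pose pt (Phi : nat -> seq nat) : forall i : 'I_l, S i :=
  fun i => odflt (x i 0) (fsum (op i) (x i) (Phi (val i))).
pose c Phi := epsilon (inhabits 0) (fun j => j < r /\ D j (pt Phi)).
have cP : forall Phi, c Phi < r /\ D (c Phi) (pt Phi).
  move=> Phi; exact: (epsilon_spec (inhabits 0) (fun j => j < r /\ D j (pt Phi)) (Hcov _)).
have cr : forall Phi, c Phi < r := fun Phi => proj1 (cP Phi).
have cdep : forall Phi Phi', (forall i, i < l -> Phi i = Phi' i) -> c Phi = c Phi'.
  move=> Phi Phi' ag.
  have E : pt Phi = pt Phi'.
    apply: functional_extensionality_dep => i; rewrite /pt ag //; exact: ltn_ord.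
  by rewrite /c E.
have l0 : 0 < l by lia.
have ll : l.-1 < l by lia.
have [Yc [bY inv]] := build m Du idem cr cdep l0 ll.
have [Z [bZ hZ]] := step Du idem cr cdep ll inv.
set j0 := hh u c l r l (fun _ => [::]) in hZ.
pose Yf i := if i == l.-1 then Z else Yc i.
have bYf : forall i, i < l -> blocks (Yf i).
  move=> i il; rewrite /Yf; case: eqVneq => // ne; apply: bY; lia.
pose y : forall i : 'I_l, nat -> S i :=
  fun i n => odflt (x i 0) (fsum (op i) (x i) (Yf (val i) n)).
have fy : forall (i : 'I_l) n, fsum (op i) (x i) (Yf i n) = Some (y i n).
  move=> i n; rewrite /y.
  have := (proj1 (Hx i)) _ (proj1 (bYf i (ltn_ord i)) n); by case: fsum.
exists j0; split; first exact: (hh_lt l Uu cr).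
exists y; split; [|split].
- move=> i hi; exists (Yf i); split; [|split; [|split]].
  + move=> n _; exact: (proj1 (bYf _ (ltn_ord i)) n).
  + by move=> _; apply/allP.
  + move=> n _; exact: (proj2 (bYf _ (ltn_ord i)) n).
  + move=> n _; exact: fy.
- move=> i hi; exists (Yf i); split; [|split; [|split]].
  + move=> n; exact: (proj1 (bYf _ (ltn_ord i)) n).
  + by apply/allP.
  + move=> n; exact: (proj2 (bYf _ (ltn_ord i)) n).
  + move=> n; exact: fy.
move=> q h1 h2.
pose Pk k (G : seq nat) := forall i : 'I_l, val i = k -> fin_index G /\
   (k < l.-1 -> all (fun n => n < m) G) /\ fsum (op i) (y i) G = Some (q i).
pose Gs k := epsilon (inhabits [::]) (Pk k).
have hG : forall k, k < l -> Pk k (Gs k).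
  move=> k kl; apply: (epsilon_spec (inhabits [::]) (Pk k)).
  pose i0 : 'I_l := Ordinal kl.
  case: (ltnP k l.-1) => hk.
    have [G [fG [mG sG]]] := h1 i0 hk.
    exists G => i ei; have -> : i = i0 by apply: val_inj.
    by split => //; split.
  have e0 : val i0 = l.-1 by rewrite /=; lia.
  have [G [fG [_ sG]]] := h2 i0 e0.
  exists G => i ei; have -> : i = i0 by apply: val_inj.
  by split => //; split => // ?; lia.
pose Phi k := UU (Yf k) (Gs k).
have cq : c Phi = j0.
  have e0 : (l - l.-1).-1 = 0 by lia.
  have := hZ Phi; rewrite e0 /=; apply.
    move=> i il.
    have il' : i < l by lia.
    have [fG [mG _]] := hG i il' (Ordinal il') erefl.
    exists (Gs i); split => //; split; first exact: mG.
    rewrite /Phi /Yf; case: eqVneq => // ?; lia.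
  have [fG _] := hG l.-1 ll (Ordinal ll) erefl.
  exists (Gs l.-1); split => //.
  by rewrite /Phi /Yf eqxx.
have ept : pt Phi = q.
  apply: functional_extensionality_dep => i.
  have [fG [_ sG]] := hG i (ltn_ord i) i erefl.
  have ne : forall n, Yf i n <> [::] by move=> n; exact: (proj1 (proj1 (bYf _ (ltn_ord i)) n)).
  rewrite /pt /Phi (fsum_flatten (Hsg i) ne (fy i) (proj1 fG)) sG //.
have := proj2 (cP Phi); by rewrite cq ept.
Qed.
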